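(* Consider Dallal's model and the hypotheses $H_0:\lambda_0=\lambda_1$ versus $H_1:\lambda_0\ne\lambda_1$. Under $H_1$ use the prior on $(0,1)^3$ $$\pi_{H_1}(\gamma,u,v)=\frac1K\frac{2^{1/2}}{B(\tfrac12,\tfrac12)}\frac{\gamma^{-1/2}(1-\gamma)^{-1/2}}{1+\gamma}(u+rv)^d\frac{u^{-1/2}(1-u)^{-1/2}}{B(\tfrac12,\tfrac12)}\frac{v^{-1/2}(1-v)^{-1/2}}{B(\tfrac12,\tfrac12)}$$ ($d\ge0$, $K$ the normalizing constant), and under $H_0$, writing $\theta=(1+\gamma)\lambda$ for the common value $\lambda=\lambda_0=\lambda_1$, use the prior $\pi_{H_0}(\gamma,\theta)=\frac{2^{1/2}}{B(\frac12,\frac12)}\frac{\gamma^{-1/2}(1-\gamma)^{-1/2}}{1+\gamma}\frac{\theta^{a-1}(1-\theta)^{-1/2}}{B(a,\frac12)}$ on $(0,1)^2$ ($a>0$). Then the marginal predictive probabilities of the data are $$p_{H_0}(D)=C\,\frac{B(m_{1+}+\tfrac12,m_{2+}+\tfrac12)}{B(\tfrac12,\tfrac12)}\frac{B(m_{1+}+m_{2+}+a,m_{0+}+\tfrac12)}{B(a,\tfrac12)},$$ $$p_{H_1}(D)=C\,\frac{B(m_{1+}+\tfrac12,m_{2+}+\tfrac12)B(m_{10}+m_{20}+\tfrac12,m_{00}+\tfrac12)B(m_{11}+m_{21}+\tfrac12,m_{01}+\tfrac12)}{B(\tfrac12,\tfrac12)^3}\cdot\frac{I}{K},$$ where $C=\binom{m_{+0}}{m_{00},m_{10},m_{20}}\binom{m_{+1}}{m_{01},m_{11},m_{21}}$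 and $I=\mathbb E[(U'+rV')^d]$ for independent $U'\sim\mathrm{Beta}(m_{10}+m_{20}+\tfrac12,m_{00}+\tfrac12)$, $V'\sim\mathrm{Beta}(m_{11}+m_{21}+\tfrac12,m_{01}+\tfrac12)$. Consequently the Bayes factor $BF_\lambda=p_{H_0}(D)/p_{H_1}(D)$ satisfies $$\frac1{BF_\lambda}=\frac{B(m_{10}+m_{20}+\tfrac12,m_{00}+\tfrac12)\,B(m_{11}+m_{21}+\tfrac12,m_{01}+\tfrac12)\,B(a,\tfrac12)}{B(m_{1+}+m_{2+}+a,m_{0+}+\tfrac12)\,B(\tfrac12,\tfrac12)^2}\cdot\frac IK .$$ In particular, for $d=0$ one has $K=I=1$.
   Context: Dallal's model: for groups $i\in\{0,1\}$ with fixed sizes $m_{+i}$, $(m_{0i},m_{1i},m_{2i})$ is trinomial with probabilities $1-(1+\gamma)\lambda_i$, $2\gamma\lambda_i$, $(1-\gamma)\lambda_i$, independently over $i$, $0<\gamma<1$, $0<\lambda_i<1/(1+\gamma)$. $U=(1+\gamma)\lambda_0$, $V=(1+\gamma)\lambda_1$, $r=m_{+1}/m_{+0}$, $m_{1+}=m_{10}+m_{11}$, $m_{2+}=m_{20}+m_{21}$, $m_{0+}=m_{00}+m_{01}$. The marginal predictive probability under a hypothesis is the likelihood (including multinomial coefficients) integrated against that hypothesis's prior. $B$ is the Beta function. *)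

(* Defs.v *)
From Stdlib Require Import Reals Lra Lia Arith ClassicalEpsilon Factorial.
Open Scope R_scope.

Definition improper01 (f : R -> R) (l : R) : Prop :=
  forall eps, 0 < eps -> exists del, 0 < del /\
    forall a b, 0 < a < del -> 1 - del < b < 1 ->
      exists pr : Riemann_integrable f a b, Rabs (RiemannInt pr - l) < eps.

Definition Int01 (f : R -> R) : R :=
  epsilon (inhabits 0) (fun l => improper01 f l).

(* Iterated integrals over (0,1)^2 and (0,1)^3 (all integrands below are
   nonnegative, so by Tonelli these are the integrals over the cubes). *)
Definition Int2 (F : R -> R -> R) : R :=
  Int01 (fun x => Int01 (fun y => F x y)).
Definition Int3 (F : R -> R -> R -> R) : R :=
  Int01 (fun x => Int01 (fun y => Int01 (fun z => F x y z))).

Definition Beta (x y : R) : R :=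
  Int01 (fun t => Rpower t (x - 1) * Rpower (1 - t) (y - 1)).

Definition beta_dens (al be t : R) : R :=
  Rpower t (al - 1) * Rpower (1 - t) (be - 1) / Beta al be.

Definition multinom (n0 n1 n2 : nat) : R :=
  INR (fact (n0 + n1 + n2)) / (INR (fact n0) * INR (fact n1) * INR (fact n2)).

Definition trinom_pmf (n0 n1 n2 : nat) (g l : R) : R :=
  multinom n0 n1 n2 * (1 - (1 + g) * l) ^ n0 * (2 * g * l) ^ n1
  * ((1 - g) * l) ^ n2.

Definition gamma_prior (g : R) : R :=
  sqrt 2 / Beta (/2) (/2) * (Rpower g (-/2) * Rpower (1 - g) (-/2) / (1 + g)).

Definition piH1_unnorm (r d g u v : R) : R :=
  gamma_prior g * Rpower (u + r * v) d
  * (Rpower u (-/2) * Rpower (1 - u) (-/2) / Beta (/2) (/2))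
  * (Rpower v (-/2) * Rpower (1 - v) (-/2) / Beta (/2) (/2)).

Definition Kconst (r d : R) : R := Int3 (piH1_unnorm r d).

Definition piH1 (r d g u v : R) : R := / Kconst r d * piH1_unnorm r d g u v.

Definition piH0 (a g th : R) : R :=
  gamma_prior g * (Rpower th (a - 1) * Rpower (1 - th) (-/2) / Beta a (/2)).

(* Marginal predictive probabilities: likelihood integrated against prior.
   Under H1, lambda_0 = u/(1+gamma), lambda_1 = v/(1+gamma);
   under H0, lambda_0 = lambda_1 = theta/(1+gamma). *)
Definition pH1 (m00 m10 m20 m01 m11 m21 : nat) (r d : R) : R :=
  Int3 (fun g u v =>
    trinom_pmf m00 m10 m20 g (u / (1 + g)) * trinom_pmf m01 m11 m21 g (v / (1 + g))
    * piH1 r d g u v).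

Definition pH0 (m00 m10 m20 m01 m11 m21 : nat) (a : R) : R :=
  Int2 (fun g th =>
    trinom_pmf m00 m10 m20 g (th / (1 + g)) * trinom_pmf m01 m11 m21 g (th / (1 + g))
    * piH0 a g th).

Definition Iconst (al0 be0 al1 be1 r d : R) : R :=
  Int2 (fun u v => Rpower (u + r * v) d * beta_dens al0 be0 u * beta_dens al1 be1 v).

(* Main.v *)
Require Import Defs.
From Stdlib Require Import Reals Lra Lia ClassicalEpsilon FunctionalExtensionality PropExtensionality Factorial.
From Coquelicot Require Import Coquelicot.
Open Scope R_scope.


Definition imp (f : R -> R) (l : R) : Prop :=
  forall eps, 0 < eps -> exists del, 0 < del /\ del <= /2 /\
    forall a b, 0 < a < del -> 1 - del < b < 1 ->
      ex_RInt f a b /\ Rabs (RInt f a b - l) < eps.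

Lemma imp_iff f l : imp f l <-> improper01 f l.
Proof.
  split.
  - intros H eps He. destruct (H eps He) as [del [Hd [Hd2 Hab]]].
    exists del; split; auto. intros a b Ha Hb.
    destruct (Hab a b Ha Hb) as [Hex Hl].
    exists (ex_RInt_Reals_0 _ _ _ Hex). rewrite <- RInt_Reals. exact Hl.
  - intros H eps He. destruct (H eps He) as [del [Hd Hab]].
    exists (Rmin del (/2)); split; [apply Rmin_pos; lra|split; [apply Rmin_r|]].
    intros a b Ha Hb.
    assert (Hm1 := Rmin_l del (/2)).
    destruct (Hab a b) as [pr Hpr]; [lra|lra|].
    split. apply ex_RInt_Reals_1; exact pr.
    rewrite (RInt_Reals _ _ _ pr). exact Hpr.
Qed.

Lemma imp_unique f l1 l2 : imp f l1 -> imp f l2 -> l1 = l2.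
Proof.
  intros H1 H2.
  apply Rminus_diag_uniq. apply Rabs_eq_0.
  apply Rle_antisym; [|apply Rabs_pos].
  apply Rnot_lt_le; intro Hp.
  set (e := Rabs (l1 - l2) / 4).
  assert (He : 0 < e) by (unfold e; lra).
  destruct (H1 e He) as [d1 [Hd1 [_ H1']]].
  destruct (H2 e He) as [d2 [Hd2 [_ H2']]].
  set (d := Rmin d1 d2).
  assert (Hd : 0 < d) by (apply Rmin_pos; lra).
  assert (Hda := Rmin_l d1 d2). assert (Hdb := Rmin_r d1 d2). fold d in Hda, Hdb.
  destruct (H1' (d/2) (1 - d/2)) as [_ A]; [lra|lra|].
  destruct (H2' (d/2) (1 - d/2)) as [_ B]; [lra|lra|].
  assert (Rabs (l1 - l2) <= Rabs (RInt f (d/2) (1-d/2) - l2) + Rabs (RInt f (d/2) (1-d/2) - l1)).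
  { replace (l1 - l2) with ((RInt f (d/2) (1-d/2) - l2) - (RInt f (d/2) (1-d/2) - l1)) by ring.
    eapply Rle_trans; [apply Rabs_triang|]. rewrite Rabs_Ropp. lra. }
  unfold e in *. lra.
Qed.

Lemma Int01_spec f l : imp f l -> imp f (Int01 f).
Proof.
  intros H. unfold Int01.
  apply imp_iff. apply epsilon_spec. exists l. apply imp_iff; exact H.
Qed.

Lemma Int01_eq f l : imp f l -> Int01 f = l.
Proof. intros H. eapply imp_unique; [apply (Int01_spec _ _ H)|exact H]. Qed.

Lemma imp_ext f g l : (forall x, 0 < x < 1 -> f x = g x) -> imp f l -> imp g l.
Proof.
  intros Hfg H eps He. destruct (H eps He) as [del [Hd [Hd2 Hab]]].
  exists del; split; auto; split; auto. intros a b Ha Hb.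
  destruct (Hab a b Ha Hb) as [Hex Hl].
  assert (Hr : forall x, Rmin a b < x < Rmax a b -> f x = g x).
  { intros x Hx. rewrite Rmin_left in Hx by lra. rewrite Rmax_right in Hx by lra.
    apply Hfg; lra. }
  split. eapply ex_RInt_ext; eauto.
  rewrite <- (RInt_ext _ _ _ _ Hr). exact Hl.
Qed.

Lemma Int01_ext f g : (forall x, 0 < x < 1 -> f x = g x) -> Int01 f = Int01 g.
Proof.
  intros Hfg. unfold Int01.
  replace (improper01 g) with (improper01 f); [reflexivity|].
  apply functional_extensionality; intro l. apply propositional_extensionality.
  rewrite <- !imp_iff. split; apply imp_ext; auto.
  intros; symmetry; auto.
Qed.

Lemma imp_scal f l c : imp f l -> imp (fun x => c * f x) (c * l).
Proof.
  intros H eps He.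
  assert (Hc : 0 < Rabs c + 1) by (generalize (Rabs_pos c); lra).
  destruct (H (eps / (Rabs c + 1))) as [del [Hd [Hd2 Hab]]].
  { apply Rdiv_lt_0_compat; lra. }
  exists del; split; auto; split; auto. intros a b Ha Hb.
  destruct (Hab a b Ha Hb) as [Hex Hl].
  split. apply (ex_RInt_scal _ _ _ c Hex).
  assert (E : RInt (fun x => c * f x) a b = c * RInt f a b).
  { apply (RInt_scal f a b c Hex). }
  rewrite E. replace (c * RInt f a b - c * l) with (c * (RInt f a b - l)) by ring.
  rewrite Rabs_mult.
  apply Rle_lt_trans with (Rabs c * (eps / (Rabs c + 1))).
  { apply Rmult_le_compat_l; [apply Rabs_pos|lra]. }
  apply Rlt_le_trans with ((Rabs c + 1) * (eps / (Rabs c + 1))).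
  { apply Rmult_lt_compat_r; [apply Rdiv_lt_0_compat|]; lra. }
  right; field; lra.
Qed.

Lemma imp_minus f g l m : imp f l -> imp g m -> imp (fun x => f x - g x) (l - m).
Proof.
  intros Hf Hg eps He.
  destruct (Hf (eps/2)) as [d1 [Hd1 [Hd1' H1]]]; [lra|].
  destruct (Hg (eps/2)) as [d2 [Hd2 [Hd2' H2]]]; [lra|].
  exists (Rmin d1 d2). assert (Hda := Rmin_l d1 d2). assert (Hdb := Rmin_r d1 d2).
  split; [apply Rmin_pos; lra|split; [lra|]].
  intros a b Ha Hb.
  destruct (H1 a b) as [E1 L1]; [lra|lra|].
  destruct (H2 a b) as [E2 L2]; [lra|lra|].
  split. apply (ex_RInt_minus f g a b E1 E2).
  assert (E : RInt (fun x => f x - g x) a b = RInt f a b - RInt g a b).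
  { apply (RInt_minus f g a b E1 E2). }
  rewrite E. replace (RInt f a b - RInt g a b - (l - m)) with ((RInt f a b - l) - (RInt g a b - m)) by ring.
  eapply Rle_lt_trans; [apply Rabs_triang|]. rewrite Rabs_Ropp. lra.
Qed.

Lemma imp_le f g l m : imp f l -> imp g m -> (forall x, 0 < x < 1 -> f x <= g x) -> l <= m.
Proof.
  intros Hf Hg Hfg. apply Rnot_lt_le; intro Hlt.
  set (e := (l - m)/4). assert (He : 0 < e) by (unfold e; lra).
  destruct (Hf e He) as [d1 [Hd1 [Hd1' H1]]].
  destruct (Hg e He) as [d2 [Hd2 [Hd2' H2]]].
  set (d := Rmin d1 d2). assert (Hda := Rmin_l d1 d2). assert (Hdb := Rmin_r d1 d2).
  fold d in Hda, Hdb. assert (Hd : 0 < d) by (apply Rmin_pos; lra).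
  destruct (H1 (d/2) (1-d/2)) as [E1 L1]; [lra|lra|].
  destruct (H2 (d/2) (1-d/2)) as [E2 L2]; [lra|lra|].
  assert (RInt f (d/2) (1-d/2) <= RInt g (d/2) (1-d/2)).
  { apply RInt_le; auto; try lra. intros x Hx; apply Hfg; lra. }
  apply Rabs_def2 in L1. apply Rabs_def2 in L2. unfold e in *. lra.
Qed.

Lemma imp_0 : imp (fun _ => 0) 0.
Proof.
  intros eps He. exists (/4). split; [lra|split; [lra|]]. intros a b _ _.
  split. apply ex_RInt_const.
  rewrite RInt_const. unfold scal; simpl; unfold mult; simpl.
  rewrite Rmult_0_r, Rminus_0_r, Rabs_R0; lra.
Qed.

Lemma imp_ge0 f l : imp f l -> (forall x, 0 < x < 1 -> 0 <= f x) -> 0 <= l.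
Proof. intros H Hp. apply (imp_le _ _ _ _ imp_0 H Hp). Qed.

Lemma imp_ex_sub f l : imp f l -> forall a b, 0 < a -> a <= b -> b < 1 -> ex_RInt f a b.
Proof.
  intros H a b Ha Hab Hb.
  destruct (H 1) as [d [Hd [Hd' H1]]]; [lra|].
  set (a' := Rmin (a/2) (d/2)). set (b' := Rmax ((1+b)/2) (1 - d/2)).
  assert (Ha1 := Rmin_l (a/2) (d/2)). assert (Ha2 := Rmin_r (a/2) (d/2)).
  assert (Hb1 := Rmax_l ((1+b)/2) (1 - d/2)). assert (Hb2 := Rmax_r ((1+b)/2) (1 - d/2)).
  fold a' b' in Ha1, Ha2, Hb1, Hb2.
  assert (Ha0 : 0 < a') by (apply Rmin_pos; lra).
  assert (Hb0 : b' < 1).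
  { unfold b', Rmax; destruct Rle_dec; lra. }
  destruct (H1 a' b') as [E _]; [lra|lra|].
  apply (ex_RInt_Chasles_2 (V:=R_CompleteNormedModule) f a' a b); [lra|].
  apply (ex_RInt_Chasles_1 (V:=R_CompleteNormedModule) f a' b b'); [lra|exact E].
Qed.

Lemma imp_bound f l : imp f l -> (forall x, 0 < x < 1 -> 0 <= f x) ->
  forall a b, 0 < a -> a <= b -> b < 1 -> RInt f a b <= l.
Proof.
  intros H Hp a b Ha Hab Hb. apply Rnot_lt_le; intro Hlt.
  set (e := (RInt f a b - l)/2). assert (He : 0 < e) by (unfold e; lra).
  destruct (H e He) as [d [Hd [Hd' H1]]].
  set (a' := Rmin (a/2) (d/2)). set (b' := Rmax ((1+b)/2) (1 - d/2)).
  assert (Ha1 := Rmin_l (a/2) (d/2)). assert (Ha2 := Rmin_r (a/2) (d/2)).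
  assert (Hb1 := Rmax_l ((1+b)/2) (1 - d/2)). assert (Hb2 := Rmax_r ((1+b)/2) (1 - d/2)).
  fold a' b' in Ha1, Ha2, Hb1, Hb2.
  assert (Ha0 : 0 < a') by (apply Rmin_pos; lra).
  assert (Hb0 : b' < 1).
  { unfold b', Rmax; destruct Rle_dec; lra. }
  destruct (H1 a' b') as [E L]; [lra|lra|].
  assert (E1 : ex_RInt f a' a) by (apply (imp_ex_sub f l H); lra).
  assert (E2 : ex_RInt f a b) by (apply (imp_ex_sub f l H); lra).
  assert (E3 : ex_RInt f b b') by (apply (imp_ex_sub f l H); lra).
  assert (C1 : RInt f a' b' = RInt f a' a + RInt f a b + RInt f b b').
  { rewrite <- (RInt_Chasles f a' a b' E1); [|eapply ex_RInt_Chasles; eauto].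
    rewrite <- (RInt_Chasles f a b b' E2 E3). unfold plus; simpl. ring. }
  assert (0 <= RInt f a' a) by (apply RInt_ge_0; auto; try lra; intros; apply Hp; lra).
  assert (0 <= RInt f b b') by (apply RInt_ge_0; auto; try lra; intros; apply Hp; lra).
  apply Rabs_def2 in L. unfold e in *. lra.
Qed.

Lemma imp_mono f M :
  (forall a b, 0 < a -> a <= b -> b < 1 -> ex_RInt f a b) ->
  (forall x, 0 < x < 1 -> 0 <= f x) ->
  (forall a b, 0 < a -> a <= b -> b < 1 -> RInt f a b <= M) ->
  exists l, imp f l /\ l <= M.
Proof.
  intros Hex Hp HM.
  set (E := fun y => exists a b, 0 < a /\ a <= b /\ b < 1 /\ y = RInt f a b).
  assert (HbE : bound E). { exists M. intros y [a [b [? [? [? ->]]]]]. apply HM; auto. }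
  assert (Hn : exists y, E y). { exists (RInt f (/4) (3/4)). exists (/4), (3/4). repeat split; lra. }
  destruct (completeness E HbE Hn) as [l [Hub Hlub]].
  exists l. split.
  2:{ apply Hlub. intros y [a [b [? [? [? ->]]]]]. apply HM; auto. }
  intros eps He.
  assert (Hex0 : exists y, E y /\ l - eps < y).
  { apply Classical_Prop.NNPP; intro Hno.
    assert (l <= l - eps); [|lra].
    apply Hlub. intros y Hy. apply Rnot_lt_le; intro Hy2. apply Hno. exists y; split; auto. }
  destruct Hex0 as [y [[a0 [b0 [Ha0 [Hab0 [Hb0 ->]]]]] Hy]].
  exists (Rmin (Rmin a0 (1 - b0)) (/2)).
  assert (H1 := Rmin_l (Rmin a0 (1 - b0)) (/2)). assert (H2 := Rmin_r (Rmin a0 (1 - b0)) (/2)).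
  assert (H3 := Rmin_l a0 (1 - b0)). assert (H4 := Rmin_r a0 (1 - b0)).
  split; [repeat apply Rmin_pos; lra|split; [lra|]].
  intros a b Ha Hb. split. apply Hex; lra.
  assert (E1 : ex_RInt f a a0) by (apply Hex; lra).
  assert (E2 : ex_RInt f a0 b0) by (apply Hex; lra).
  assert (E3 : ex_RInt f b0 b) by (apply Hex; lra).
  assert (C1 : RInt f a b = RInt f a a0 + RInt f a0 b0 + RInt f b0 b).
  { rewrite <- (RInt_Chasles f a a0 b E1); [|eapply ex_RInt_Chasles; eauto].
    rewrite <- (RInt_Chasles f a0 b0 b E2 E3). unfold plus; simpl. ring. }
  assert (0 <= RInt f a a0) by (apply RInt_ge_0; auto; try lra; intros; apply Hp; lra).
  assert (0 <= RInt f b0 b) by (apply RInt_ge_0; auto; try lra; intros; apply Hp; lra).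
  assert (RInt f a b <= l). { apply Hub. exists a, b. repeat split; lra. }
  apply Rabs_def1; lra.
Qed.

Lemma imp_comp f g m :
  (forall a b, 0 < a -> a <= b -> b < 1 -> ex_RInt f a b) ->
  (forall x, 0 < x < 1 -> 0 <= f x <= g x) -> imp g m ->
  exists l, imp f l /\ l <= m.
Proof.
  intros Hex Hfg Hg. apply imp_mono; auto.
  - intros x Hx; apply Hfg; auto.
  - intros a b Ha Hab Hb.
    apply Rle_trans with (RInt g a b).
    + apply RInt_le; auto. apply (imp_ex_sub g m Hg); auto.
      intros x Hx; apply Hfg; lra.
    + apply (imp_bound g m Hg); auto. intros x Hx; generalize (Hfg x Hx); lra.
Qed.


Lemma cont_pt (f : R -> R) x : continuity_pt f x -> continuous f x.
Proof. intros H; apply continuity_pt_filterlim; exact H. Qed.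

Lemma cont_Rpower p x : 0 < x -> continuous (fun t => Rpower t p) x.
Proof.
  intros Hx. apply cont_pt. apply derivable_continuous_pt.
  exists (p * Rpower x (p - 1)). apply derivable_pt_lim_power; exact Hx.
Qed.

Lemma cont_inv (f : R -> R) x : continuous f x -> f x <> 0 -> continuous (fun y => / f y) x.
Proof.
  intros H Hn. apply cont_pt.
  apply (continuity_pt_inv f x); [apply continuity_pt_filterlim; exact H|exact Hn].
Qed.

Lemma cont_Rpower_comp (f : R -> R) p x : continuous f x -> 0 < f x -> continuous (fun t => Rpower (f t) p) x.
Proof.
  intros H Hp. apply (continuous_comp f (fun t => Rpower t p)); auto.
  apply cont_Rpower; auto.
Qed.

Lemma cont_1m x : continuous (fun t => 1 - t) x.
Proof. apply (continuous_minus (fun _ => 1) (fun t => t)); [apply continuous_const|apply continuous_id]. Qed.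

Lemma rp_mono z p q : 0 < z <= 1 -> p <= q -> Rpower z q <= Rpower z p.
Proof.
  intros Hz Hpq. unfold Rpower.
  assert (ln z <= 0). { rewrite <- ln_1. apply ln_le; lra. }
  assert (q * ln z <= p * ln z) by nra.
  destruct (Rle_lt_or_eq_dec _ _ H0) as [h|h]; [left; apply exp_increasing; auto|rewrite h; lra].
Qed.

Lemma rp_pos z p : 0 < Rpower z p.
Proof. unfold Rpower; apply exp_pos. Qed.

Lemma rp_m1 z : 0 < z -> Rpower z (-1) = / z.
Proof. intros Hz. replace (-1) with (- (1)) by ring. rewrite Rpower_Ropp, Rpower_1; auto. Qed.

Lemma rp_0 z : Rpower z 0 = 1.
Proof. unfold Rpower. rewrite Rmult_0_l. apply exp_0. Qed.

Definition bw (x y t : R) : R := Rpower t (x - 1) * Rpower (1 - t) (y - 1).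

Lemma bw_pos x y t : 0 < bw x y t.
Proof. unfold bw. apply Rmult_lt_0_compat; apply rp_pos. Qed.

Lemma bw_cont x y t : 0 < t < 1 -> continuous (bw x y) t.
Proof.
  intros Ht. unfold bw.
  apply (continuous_mult (fun t => Rpower t (x - 1)) (fun t => Rpower (1 - t) (y - 1))).
  apply cont_Rpower; lra.
  apply cont_Rpower_comp; [apply cont_1m|lra].
Qed.

Lemma bw_bound x y t : 0 < x -> 0 < y -> 0 < t < 1 ->
  bw x y t <= 2 * (Rpower t (x - 1) + Rpower (1 - t) (y - 1)).
Proof.
  intros Hx Hy Ht. unfold bw.
  assert (P1 := rp_pos t (x-1)). assert (P2 := rp_pos (1-t) (y-1)).
  destruct (Rle_lt_dec t (/2)) as [h|h].
  - assert (Rpower (1 - t) (y - 1) <= Rpower (1-t) (-1)) by (apply rp_mono; lra).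
    rewrite rp_m1 in H by lra.
    assert (/ (1 - t) <= 2).
    { apply (Rmult_le_reg_l (1 - t)); [lra|]. rewrite Rinv_r by lra. lra. }
    nra.
  - assert (Rpower t (x - 1) <= Rpower t (-1)) by (apply rp_mono; lra).
    rewrite rp_m1 in H by lra.
    assert (/ t <= 2).
    { apply (Rmult_le_reg_l t); [lra|]. rewrite Rinv_r by lra. lra. }
    nra.
Qed.

Lemma is_derive_eq (f : R -> R) x l l' : is_derive f x l -> l = l' -> is_derive f x l'.
Proof. intros H ->; exact H. Qed.

Lemma bw_RInt_bound x y a b : 0 < x -> 0 < y -> 0 < a -> a <= b -> b < 1 ->
  RInt (bw x y) a b <= 2 * (/x + /y).
Proof.
  intros Hx Hy Ha Hab Hb.
  set (g := fun t => 2 * (Rpower t (x - 1) + Rpower (1 - t) (y - 1))).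
  set (F := fun t => 2 * (/x * Rpower t x - /y * Rpower (1 - t) y)).
  assert (Hmm : forall z, Rmin a b <= z <= Rmax a b -> 0 < z < 1).
  { intros z Hz. rewrite Rmin_left, Rmax_right in Hz by lra. lra. }
  assert (Hg : is_RInt g a b (minus (F b) (F a))).
  { apply (is_RInt_derive (V:=R_CompleteNormedModule) F g).
    - intros z Hz. apply Hmm in Hz.
      assert (D1 : is_derive (fun t => Rpower t x) z (x * Rpower z (x - 1)))
        by (apply is_derive_Reals, derivable_pt_lim_power; lra).
      assert (D2 : is_derive (fun t => Rpower (1 - t) y) z (scal (-1) (y * Rpower (1 - z) (y - 1)))).
      { apply (is_derive_comp (fun s => Rpower s y) (fun t => 1 - t)).
        apply is_derive_Reals, derivable_pt_lim_power; lra.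
        auto_derive; auto; ring. }
      apply (is_derive_scal _ _ 2).
      apply is_derive_eq with (minus (/x * (x * Rpower z (x - 1))) (/y * (scal (-1) (y * Rpower (1 - z) (y - 1))))).
      apply (is_derive_minus (fun t => /x * Rpower t x) (fun t => /y * Rpower (1 - t) y)).
      apply is_derive_scal; exact D1. apply is_derive_scal; exact D2.
      unfold minus, plus, opp, scal; simpl; unfold mult; simpl. field; lra.
    - intros z Hz. apply Hmm in Hz. unfold g.
      apply (continuous_scal_r 2 (fun t => Rpower t (x - 1) + Rpower (1 - t) (y - 1))).
      apply (continuous_plus (fun t => Rpower t (x - 1)) (fun t => Rpower (1 - t) (y - 1))).
      apply cont_Rpower; lra. apply cont_Rpower_comp; [apply cont_1m|lra]. }
  apply (is_RInt_unique (V:=R_CompleteNormedModule)) in Hg.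
  assert (Exg : ex_RInt g a b).
  { apply (ex_RInt_continuous (V:=R_CompleteNormedModule)). intros z Hz. apply Hmm in Hz. unfold g.
      apply (continuous_scal_r 2 (fun t => Rpower t (x - 1) + Rpower (1 - t) (y - 1))).
      apply (continuous_plus (fun t => Rpower t (x - 1)) (fun t => Rpower (1 - t) (y - 1))).
      apply cont_Rpower; lra. apply cont_Rpower_comp; [apply cont_1m|lra]. }
  apply Rle_trans with (RInt g a b).
  - apply RInt_le; auto.
    apply (ex_RInt_continuous (V:=R_CompleteNormedModule)). intros z Hz. apply bw_cont, Hmm; auto.
    intros z Hz. apply bw_bound; auto; lra.
  - rewrite Hg. unfold minus, plus, opp, F; simpl.
    assert (Rpower b x <= 1). { apply Rle_trans with (Rpower b 0); [apply rp_mono; lra|rewrite rp_0; lra]. }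
    assert (Rpower (1 - a) y <= 1). { apply Rle_trans with (Rpower (1 - a) 0); [apply rp_mono; lra|rewrite rp_0; lra]. }
    assert (0 < Rpower a x) by apply rp_pos.
    assert (0 < Rpower (1 - b) y) by apply rp_pos.
    assert (0 < /x) by (apply Rinv_0_lt_compat; lra).
    assert (0 < /y) by (apply Rinv_0_lt_compat; lra).
    nra.
Qed.

Lemma beta_imp x y : 0 < x -> 0 < y -> imp (bw x y) (Beta x y) /\ 0 < Beta x y.
Proof.
  intros Hx Hy.
  destruct (imp_mono (bw x y) (2 * (/x + /y))) as [l [Hl _]].
  - intros a b Ha Hab Hb. apply (ex_RInt_continuous (V:=R_CompleteNormedModule)). intros z Hz.
    rewrite Rmin_left, Rmax_right in Hz by lra. apply bw_cont; lra.
  - intros; left; apply bw_pos.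
  - intros; apply bw_RInt_bound; auto.
  - assert (E : Beta x y = l) by (apply Int01_eq; exact Hl).
    rewrite E. split; auto.
    apply Rlt_le_trans with (RInt (bw x y) (/4) (3/4)).
    + apply RInt_gt_0; [lra| intros; apply bw_pos|].
      intros z Hz; apply bw_cont; lra.
    + apply (imp_bound _ _ Hl); try lra. intros; left; apply bw_pos.
Qed.


Lemma rp_half t n : 0 < t -> Rpower t (INR n + /2 - 1) = t ^ n * Rpower t (- /2).
Proof.
  intros Ht. replace (INR n + /2 - 1) with (INR n + - /2) by field.
  rewrite Rpower_plus, Rpower_pow; auto.
Qed.

Lemma rp_mhalf t : 0 < t -> Rpower t (- /2) = / sqrt t.
Proof. intros Ht. rewrite Rpower_Ropp, Rpower_sqrt; auto. Qed.

Lemma exd_cont (f : R -> R) x : ex_derive f x -> continuous f x.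
Proof. apply (ex_derive_continuous (K:=R_AbsRing) (V:=R_NormedModule)). Qed.

Definition phi (n1 n2 : nat) (g : R) : R :=
  sqrt 2 * (Rpower g (- /2) * Rpower (1 - g) (- /2) / (1 + g))
  * (2 * g / (1 + g)) ^ n1 * ((1 - g) / (1 + g)) ^ n2.

Definition Tg (g : R) : R := 2 * g / (1 + g).
Definition dTg (g : R) : R := 2 / (1 + g) ^ 2.

Lemma alg1 (s1 s2 sg sq g A B : R) : 0 < s1 -> 0 < s2 -> 0 < sg -> 0 < sq ->
  s1 * s1 = 1 + g -> s2 * s2 = 2 ->
  s2 * (/ sg * / sq / (1 + g)) * A * B =
  2 / (1 + g) ^ 2 * (A * / (s2 * sg / s1) * (B * / (sq / s1))).
Proof.
  intros H1 H2 H3 H4 E1 E2. rewrite <- E1, <- E2. field. repeat split; lra.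
Qed.

Lemma phi_eq n1 n2 g : 0 < g < 1 ->
  phi n1 n2 g = dTg g * bw (INR n1 + /2) (INR n2 + /2) (Tg g).
Proof.
  intros Hg. unfold phi, dTg, bw, Tg.
  assert (HT : 0 < 2 * g / (1 + g)) by (apply Rdiv_lt_0_compat; lra).
  assert (E1 : 1 - 2 * g / (1 + g) = (1 - g) / (1 + g)) by (field; lra).
  assert (HU : 0 < (1 - g) / (1 + g)) by (apply Rdiv_lt_0_compat; lra).
  rewrite E1, !rp_half by auto. rewrite !rp_mhalf by lra.
  rewrite (sqrt_div (2 * g) (1 + g)) by lra.
  rewrite (sqrt_mult_alt 2 g) by lra.
  rewrite (sqrt_div (1 - g) (1 + g)) by lra.
  set (A := (2 * g / (1 + g)) ^ n1). set (B := ((1 - g) / (1 + g)) ^ n2).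
  apply alg1.
  apply sqrt_lt_R0; lra. apply sqrt_lt_R0; lra. apply sqrt_lt_R0; lra. apply sqrt_lt_R0; lra.
  apply sqrt_sqrt; lra. apply sqrt_sqrt; lra.
Qed.

Lemma phi_cont n1 n2 g : 0 < g < 1 -> continuous (phi n1 n2) g.
Proof.
  intros Hg.
  apply (continuous_ext_loc _ (fun g => dTg g * bw (INR n1 + /2) (INR n2 + /2) (Tg g))).
  - assert (Hp : 0 < Rmin g (1 - g)) by (apply Rmin_pos; lra).
    exists (mkposreal _ Hp). intros y Hy. simpl in Hy.
    unfold ball in Hy; simpl in Hy; unfold AbsRing_ball, abs, minus, plus, opp in Hy; simpl in Hy.
    assert (Hm1 := Rmin_l g (1-g)). assert (Hm2 := Rmin_r g (1-g)).
    apply Rabs_def2 in Hy. symmetry; apply phi_eq; lra.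
  - apply (continuous_mult (K:=R_AbsRing) dTg (fun g => bw (INR n1 + /2) (INR n2 + /2) (Tg g))).
    + apply exd_cont. unfold dTg. auto_derive. intro; nra.
    + apply (continuous_comp Tg). apply exd_cont. unfold Tg. auto_derive. lra.
      apply bw_cont. unfold Tg. split. apply Rdiv_lt_0_compat; lra.
      apply (Rmult_lt_reg_r (1 + g)); [lra|]. unfold Rdiv. rewrite Rmult_assoc, Rinv_l by lra. lra.
Qed.

Lemma Tg_range g : 0 < g < 1 -> 0 < Tg g < 1.
Proof.
  intros Hg. unfold Tg. split. apply Rdiv_lt_0_compat; lra.
  apply (Rmult_lt_reg_r (1 + g)); [lra|]. unfold Rdiv. rewrite Rmult_assoc, Rinv_l by lra. lra.
Qed.

Lemma phi_RInt n1 n2 a b : 0 < a -> a <= b -> b < 1 ->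
  ex_RInt (phi n1 n2) a b /\
  RInt (phi n1 n2) a b = RInt (bw (INR n1 + /2) (INR n2 + /2)) (Tg a) (Tg b).
Proof.
  intros Ha Hab Hb.
  set (f := bw (INR n1 + /2) (INR n2 + /2)).
  assert (Hmm : forall z, Rmin a b <= z <= Rmax a b -> 0 < z < 1).
  { intros z Hz. rewrite Rmin_left, Rmax_right in Hz by lra. lra. }
  assert (HC : is_RInt (fun y => scal (dTg y) (f (Tg y))) a b (RInt f (Tg a) (Tg b))).
  { apply (is_RInt_comp (V:=R_CompleteNormedModule)).
    - intros z Hz. apply Hmm in Hz. apply bw_cont. apply Tg_range; auto.
    - intros z Hz. apply Hmm in Hz. split.
      + unfold Tg, dTg. auto_derive. intro; nra. field. lra.
      + apply exd_cont. unfold dTg. auto_derive. intro; nra. }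
  assert (Hext : forall x, Rmin a b < x < Rmax a b -> scal (dTg x) (f (Tg x)) = phi n1 n2 x).
  { intros x Hx. rewrite Rmin_left, Rmax_right in Hx by lra.
    rewrite phi_eq by lra. reflexivity. }
  split.
  - eapply (ex_RInt_ext (V:=R_NormedModule)). exact Hext. exists (RInt f (Tg a) (Tg b)); exact HC.
  - rewrite <- (RInt_ext (V:=R_CompleteNormedModule) _ _ _ _ Hext).
    apply (is_RInt_unique (V:=R_CompleteNormedModule)). exact HC.
Qed.

Lemma phi_imp n1 n2 : imp (phi n1 n2) (Beta (INR n1 + /2) (INR n2 + /2)).
Proof.
  assert (Hx : 0 < INR n1 + /2) by (generalize (pos_INR n1); lra).
  assert (Hy : 0 < INR n2 + /2) by (generalize (pos_INR n2); lra).
  destruct (beta_imp _ _ Hx Hy) as [HB _].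
  intros eps He. destruct (HB eps He) as [d [Hd [Hd2 H]]].
  exists (d / 2). split; [lra|split; [lra|]].
  intros a b Ha Hb.
  destruct (phi_RInt n1 n2 a b) as [E1 E2]; try lra.
  split; auto. rewrite E2.
  assert (Ta := Tg_range a). assert (Tb := Tg_range b).
  destruct (H (Tg a) (Tg b)) as [_ L]; auto.
  - split. apply Ta; lra. unfold Tg.
    apply (Rmult_lt_reg_r (1 + a)); [lra|]. unfold Rdiv. rewrite Rmult_assoc, Rinv_l by lra. nra.
  - split; [|apply Tb; lra].
    assert (1 - Tg b = (1 - b) / (1 + b)) by (unfold Tg; field; lra).
    assert ((1 - b) / (1 + b) <= 1 - b).
    { apply (Rmult_le_reg_r (1 + b)); [lra|]. unfold Rdiv. rewrite Rmult_assoc, Rinv_l by lra. nra. }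
    lra.
Qed.


Section Dbl.
Variables (al0 be0 al1 be1 r d : R).
Hypotheses (Ha0 : 0 < al0) (Hb0 : 0 < be0) (Ha1 : 0 < al1) (Hb1 : 0 < be1)
  (Hr : 0 <= r) (Hd : 0 <= d).

Let P u v := Rpower (u + r * v) d.
Let w0 := bw al0 be0.
Let w1 := bw al1 be1.
Let B0 := Beta al0 be0.
Let B1 := Beta al1 be1.
Let Mx := Rpower (1 + r) d.

Definition Qf u := Int01 (fun v => Rpower (u + r * v) d * bw al1 be1 v).

Lemma P_bound u v : 0 < u < 1 -> 0 < v < 1 -> 0 <= P u v <= Mx.
Proof.
  intros Hu Hv. unfold P, Mx. split. left; apply rp_pos.
  apply Rle_Rpower_l; auto. split; nra.
Qed.

Lemma Q_spec u : 0 < u < 1 ->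
  imp (fun v => P u v * w1 v) (Qf u) /\ 0 <= Qf u <= Mx * B1.
Proof.
  intros Hu. destruct (beta_imp al1 be1 Ha1 Hb1) as [HB1 HB1p].
  destruct (imp_comp (fun v => P u v * w1 v) (fun v => Mx * w1 v) (Mx * B1)) as [l [Hl Hlm]].
  - intros a b Ha Hab Hb. apply (ex_RInt_continuous (V:=R_CompleteNormedModule)).
    intros z Hz. rewrite Rmin_left, Rmax_right in Hz by lra.
    apply (continuous_mult (K:=R_AbsRing) (fun v => P u v) w1).
    + unfold P. apply cont_Rpower_comp. apply exd_cont; auto_derive; auto. nra.
    + apply bw_cont; lra.
  - intros x Hx. destruct (P_bound u x Hu Hx). assert (0 < w1 x) by apply bw_pos. split; nra.
  - apply imp_scal. exact HB1.
  - assert (E : Qf u = l) by (apply Int01_eq; exact Hl). fold w1 in E. rewrite E.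
    split; auto. split; auto.
    apply (imp_ge0 _ _ Hl). intros x Hx. destruct (P_bound u x Hu Hx). assert (0 < w1 x) by apply bw_pos. nra.
Qed.

Lemma Q_cont u0 : 0 < u0 < 1 -> continuous Qf u0.
Proof.
  intros Hu0. apply cont_pt. intros eps He.
  destruct (beta_imp al1 be1 Ha1 Hb1) as [HB1 HB1p].
  assert (He' : 0 < eps / (2 * (B1 + 1))) by (apply Rdiv_lt_0_compat; unfold B1 in *; lra).
  assert (Hc : forall x, u0 / 2 <= x <= 1 + r -> continuity_pt (fun t => Rpower t d) x).
  { intros x Hx. apply derivable_continuous_pt. exists (d * Rpower x (d - 1)).
    apply derivable_pt_lim_power; lra. }
  destruct (Heine_cor2 Hc (mkposreal _ He')) as [del Hdel].
  exists (Rmin del (Rmin (u0 / 2) (1 - u0))).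
  assert (Hm1 := Rmin_l del (Rmin (u0 / 2) (1 - u0))).
  assert (Hm2 := Rmin_r del (Rmin (u0 / 2) (1 - u0))).
  assert (Hm3 := Rmin_l (u0 / 2) (1 - u0)). assert (Hm4 := Rmin_r (u0 / 2) (1 - u0)).
  assert (Hdp := cond_pos del).
  split. { repeat apply Rmin_pos; lra. }
  intros u [_ Hu]. unfold R_dist in *. apply Rabs_def2 in Hu.
  assert (Hu1 : 0 < u < 1) by lra.
  destruct (Q_spec u Hu1) as [Qu _]. destruct (Q_spec u0 Hu0) as [Qu0 _].
  assert (Hm := imp_minus _ _ _ _ Qu Qu0).
  assert (Hpt : forall v, 0 < v < 1 -> Rabs (P u v - P u0 v) < eps / (2 * (B1 + 1))).
  { intros v Hv. apply (Hdel (u + r * v) (u0 + r * v)); try (split; nra).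
    replace (u + r * v - (u0 + r * v)) with (u - u0) by ring. apply Rabs_def1; lra. }
  assert (U : Qf u - Qf u0 <= eps / (2 * (B1 + 1)) * B1).
  { apply (imp_le _ _ _ _ Hm (imp_scal _ _ (eps / (2 * (B1 + 1))) HB1)).
    intros v Hv. specialize (Hpt v Hv). apply Rabs_def2 in Hpt. assert (0 < w1 v) by apply bw_pos.
    fold w1. nra. }
  assert (L : - (eps / (2 * (B1 + 1))) * B1 <= Qf u - Qf u0).
  { apply (imp_le _ _ _ _ (imp_scal _ _ (- (eps / (2 * (B1 + 1)))) HB1) Hm).
    intros v Hv. specialize (Hpt v Hv). apply Rabs_def2 in Hpt. assert (0 < w1 v) by apply bw_pos.
    fold w1. nra. }
  assert (eps / (2 * (B1 + 1)) * B1 < eps).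
  { assert (Ek : eps / (2 * (B1 + 1)) * (2 * (B1 + 1)) = eps) by (field; unfold B1 in *; lra).
    unfold B1 in *; nra. }
  apply Rabs_def1; lra.
Qed.

Definition Jf u := bw al0 be0 u * Qf u.

Lemma J_imp : exists L, imp Jf L.
Proof.
  destruct (beta_imp al0 be0 Ha0 Hb0) as [HB0 HB0p].
  destruct (beta_imp al1 be1 Ha1 Hb1) as [HB1 HB1p].
  destruct (imp_comp Jf (fun u => (Mx * B1) * w0 u) ((Mx * B1) * B0)) as [l [Hl _]].
  - intros a b Ha Hab Hb. apply (ex_RInt_continuous (V:=R_CompleteNormedModule)).
    intros z Hz. rewrite Rmin_left, Rmax_right in Hz by lra. unfold Jf.
    apply (continuous_mult (K:=R_AbsRing) (bw al0 be0) Qf).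
    apply bw_cont; lra. apply Q_cont; lra.
  - intros x Hx. destruct (Q_spec x Hx) as [_ [Q1 Q2]]. unfold Jf.
    assert (0 < w0 x) by apply bw_pos. fold w0. split; nra.
  - apply imp_scal. exact HB0.
  - exists l; exact Hl.
Qed.

Lemma dbl : exists L,
  (forall c, Int01 (fun u => Int01 (fun v => c * (Rpower (u + r * v) d * bw al0 be0 u * bw al1 be1 v))) = c * L)
  /\ (d = 0 -> L = Beta al0 be0 * Beta al1 be1).
Proof.
  destruct J_imp as [L HL]. exists L. split.
  - intros c.
    rewrite (Int01_ext _ (fun u => c * Jf u)).
    + apply Int01_eq. apply imp_scal. exact HL.
    + intros u Hu. apply Int01_eq. destruct (Q_spec u Hu) as [Qu _].
      apply (imp_ext (fun v => (c * bw al0 be0 u) * (P u v * w1 v))).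
      intros v Hv. unfold P, w1. ring.
      unfold Jf. replace (c * (bw al0 be0 u * Qf u)) with ((c * bw al0 be0 u) * Qf u) by ring.
      apply imp_scal. exact Qu.
  - intros Hd0. destruct (beta_imp al0 be0 Ha0 Hb0) as [HB0 HB0p].
    destruct (beta_imp al1 be1 Ha1 Hb1) as [HB1 HB1p].
    assert (H : imp Jf (Beta al1 be1 * Beta al0 be0)).
    { apply (imp_ext (fun u => Beta al1 be1 * bw al0 be0 u)).
      - intros u Hu. unfold Jf. destruct (Q_spec u Hu) as [Qu _].
        assert (E : Qf u = Beta al1 be1).
        { apply (imp_unique _ _ _ Qu). apply (imp_ext (bw al1 be1)); auto.
          intros v Hv. unfold P. rewrite Hd0, rp_0. fold w1. ring. }
        rewrite E; ring.
      - apply imp_scal; exact HB0. }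
    rewrite (imp_unique _ _ _ HL H). ring.
Qed.

End Dbl.


Lemma pow_split_u g u n : 0 < g < 1 ->
  (2 * g * (u / (1 + g))) ^ n = (2 * g / (1 + g)) ^ n * u ^ n.
Proof. intros Hg. rewrite <- Rpow_mult_distr. f_equal. field. lra. Qed.

Lemma pow_split_u2 g u n : 0 < g < 1 ->
  ((1 - g) * (u / (1 + g))) ^ n = ((1 - g) / (1 + g)) ^ n * u ^ n.
Proof. intros Hg. rewrite <- Rpow_mult_distr. f_equal. field. lra. Qed.

Lemma one_m g u : 0 < g < 1 -> 1 - (1 + g) * (u / (1 + g)) = 1 - u.
Proof. intros Hg. field. lra. Qed.

Lemma F_eq (m00 m10 m20 m01 m11 m21 : nat) r d g u v : 0 < g < 1 -> 0 < u < 1 -> 0 < v < 1 ->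
  trinom_pmf m00 m10 m20 g (u / (1 + g)) * trinom_pmf m01 m11 m21 g (v / (1 + g)) * piH1 r d g u v
  = (multinom m00 m10 m20 * multinom m01 m11 m21 * / Kconst r d * / (Beta (/2) (/2)) ^ 3)
    * phi (m10 + m11) (m20 + m21) g
    * (Rpower (u + r * v) d * bw (INR (m10 + m20) + /2) (INR m00 + /2) u
                            * bw (INR (m11 + m21) + /2) (INR m01 + /2) v).
Proof.
  intros Hg Hu Hv.
  unfold trinom_pmf, piH1, piH1_unnorm, gamma_prior, phi, bw.
  rewrite !rp_half by lra.
  rewrite !one_m, !pow_split_u, !pow_split_u2 by lra.
  rewrite !pow_add.
  set (iK := / Kconst r d).
  assert (0 < Beta (/2) (/2)) by (apply beta_imp; lra).
  field. lra.
Qed.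

Lemma rp_na t n1 n2 a : 0 < t -> Rpower t (INR n1 + INR n2 + a - 1) = t ^ n1 * t ^ n2 * Rpower t (a - 1).
Proof.
  intros Ht. replace (INR n1 + INR n2 + a - 1) with (INR n1 + (INR n2 + (a - 1))) by ring.
  rewrite !Rpower_plus, !Rpower_pow by auto. ring.
Qed.

Lemma G_eq (m00 m10 m20 m01 m11 m21 : nat) a g t : 0 < a -> 0 < g < 1 -> 0 < t < 1 ->
  trinom_pmf m00 m10 m20 g (t / (1 + g)) * trinom_pmf m01 m11 m21 g (t / (1 + g)) * piH0 a g t
  = (multinom m00 m10 m20 * multinom m01 m11 m21 * / Beta (/2) (/2) * / Beta a (/2))
    * phi (m10 + m11) (m20 + m21) g
    * bw (INR (m10 + m11) + INR (m20 + m21) + a) (INR (m00 + m01) + /2) t.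
Proof.
  intros Ha Hg Ht.
  unfold trinom_pmf, piH0, gamma_prior, phi, bw.
  rewrite rp_na by lra. rewrite rp_half by lra.
  rewrite !one_m, !pow_split_u, !pow_split_u2 by lra.
  rewrite !pow_add.
  assert (0 < Beta (/2) (/2)) by (apply beta_imp; lra).
  assert (0 < Beta a (/2)) by (apply beta_imp; lra).
  field. lra.
Qed.

Lemma gp_eq g : gamma_prior g = / Beta (/2) (/2) * phi 0 0 g.
Proof. unfold gamma_prior, phi. rewrite !pow_O. unfold Rdiv. ring. Qed.

Lemma piH1u_eq r d g u v : piH1_unnorm r d g u v
  = (gamma_prior g * / Beta (/2) (/2) ^ 2) * (Rpower (u + r * v) d * bw (/2) (/2) u * bw (/2) (/2) v).
Proof.
  unfold piH1_unnorm, bw. replace (/2 - 1) with (- /2) by field.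
  assert (0 < Beta (/2) (/2)) by (apply beta_imp; lra).
  set (gp := gamma_prior g). field. lra.
Qed.

Lemma phi00_imp : imp (phi 0 0) (Beta (/2) (/2)).
Proof. assert (H := phi_imp 0 0). simpl INR in H. rewrite Rplus_0_l in H. exact H. Qed.

Lemma K_val r d : 0 <= r -> 0 <= d -> exists LK,
  Kconst r d = LK * / Beta (/2) (/2) ^ 2 /\ (d = 0 -> LK = Beta (/2) (/2) * Beta (/2) (/2)).
Proof.
  intros Hr Hd.
  assert (Hh : 0 < /2) by lra.
  destruct (dbl (/2) (/2) (/2) (/2) r d Hh Hh Hh Hh Hr Hd) as [LK [HL HL0]].
  exists LK. split; [|exact HL0].
  assert (HB : 0 < Beta (/2) (/2)) by (apply beta_imp; lra).
  unfold Kconst, Int3.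
  rewrite (Int01_ext _ (fun g => (LK * / Beta (/2) (/2) ^ 2 * / Beta (/2) (/2)) * phi 0 0 g)).
  - rewrite (Int01_eq _ _ (imp_scal _ _ (LK * / Beta (/2) (/2) ^ 2 * / Beta (/2) (/2)) phi00_imp)).
    field. lra.
  - intros g Hg.
    transitivity ((gamma_prior g * / Beta (/2) (/2) ^ 2) * LK).
    + rewrite <- HL. apply Int01_ext; intros u Hu. apply Int01_ext; intros v Hv. apply piH1u_eq.
    + rewrite gp_eq. field. lra.
Qed.

Lemma pH1_val (m00 m10 m20 m01 m11 m21 : nat) r d : 0 <= r -> 0 <= d ->
  let al0 := INR (m10 + m20) + /2 in
  let be0 := INR m00 + /2 in
  let al1 := INR (m11 + m21) + /2 in
  let be1 := INR m01 + /2 in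
  exists L,
  pH1 m00 m10 m20 m01 m11 m21 r d =
    (multinom m00 m10 m20 * multinom m01 m11 m21 * / Kconst r d * / (Beta (/2) (/2)) ^ 3) * L
    * Beta (INR (m10 + m11) + /2) (INR (m20 + m21) + /2)
  /\ Iconst al0 be0 al1 be1 r d = L * / (Beta al0 be0 * Beta al1 be1)
  /\ (d = 0 -> L = Beta al0 be0 * Beta al1 be1).
Proof.
  intros Hr Hd al0 be0 al1 be1.
  assert (Ha0 : 0 < al0) by (unfold al0; generalize (pos_INR (m10 + m20)); lra).
  assert (Hb0 : 0 < be0) by (unfold be0; generalize (pos_INR m00); lra).
  assert (Ha1 : 0 < al1) by (unfold al1; generalize (pos_INR (m11 + m21)); lra).
  assert (Hb1 : 0 < be1) by (unfold be1; generalize (pos_INR m01); lra).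
  destruct (dbl al0 be0 al1 be1 r d Ha0 Hb0 Ha1 Hb1 Hr Hd) as [L [HL HL0]].
  exists L. split; [|split; [|exact HL0]].
  - set (c := multinom m00 m10 m20 * multinom m01 m11 m21 * / Kconst r d * / (Beta (/2) (/2)) ^ 3).
    unfold pH1, Int3.
    rewrite (Int01_ext _ (fun g => (c * L) * phi (m10 + m11) (m20 + m21) g)).
    + rewrite (Int01_eq _ _ (imp_scal _ _ (c * L) (phi_imp (m10 + m11) (m20 + m21)))). ring.
    + intros g Hg. transitivity ((c * phi (m10 + m11) (m20 + m21) g) * L); [|ring].
      rewrite <- HL. apply Int01_ext; intros u Hu. apply Int01_ext; intros v Hv.
      unfold c. rewrite F_eq by auto. unfold al0, be0, al1, be1. ring.
  - assert (P0 : 0 < Beta al0 be0) by (apply beta_imp; auto).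
    assert (P1 : 0 < Beta al1 be1) by (apply beta_imp; auto).
    unfold Iconst, Int2.
    transitivity (/ (Beta al0 be0 * Beta al1 be1) * L); [|ring].
    rewrite <- HL. apply Int01_ext; intros u Hu. apply Int01_ext; intros v Hv.
    unfold beta_dens, bw. field. lra.
Qed.

Lemma pH0_val (m00 m10 m20 m01 m11 m21 : nat) a : 0 < a ->
  pH0 m00 m10 m20 m01 m11 m21 a =
  (multinom m00 m10 m20 * multinom m01 m11 m21 * / Beta (/2) (/2) * / Beta a (/2))
  * Beta (INR (m10 + m11) + INR (m20 + m21) + a) (INR (m00 + m01) + /2)
  * Beta (INR (m10 + m11) + /2) (INR (m20 + m21) + /2).
Proof.
  intros Ha.
  set (c := multinom m00 m10 m20 * multinom m01 m11 m21 * / Beta (/2) (/2) * / Beta a (/2)).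
  set (Bt := Beta (INR (m10 + m11) + INR (m20 + m21) + a) (INR (m00 + m01) + /2)).
  assert (Hx : 0 < INR (m10 + m11) + INR (m20 + m21) + a)
    by (generalize (pos_INR (m10 + m11)) (pos_INR (m20 + m21)); lra).
  assert (Hy : 0 < INR (m00 + m01) + /2) by (generalize (pos_INR (m00 + m01)); lra).
  destruct (beta_imp _ _ Hx Hy) as [HBt _].
  unfold pH0, Int2.
  rewrite (Int01_ext _ (fun g => (c * Bt) * phi (m10 + m11) (m20 + m21) g)).
  - rewrite (Int01_eq _ _ (imp_scal _ _ (c * Bt) (phi_imp (m10 + m11) (m20 + m21)))). ring.
  - intros g Hg. replace (c * Bt * phi (m10 + m11) (m20 + m21) g)
      with ((c * phi (m10 + m11) (m20 + m21) g) * Bt) by ring.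
    apply Int01_eq. apply (imp_ext (fun t => (c * phi (m10 + m11) (m20 + m21) g) *
      bw (INR (m10 + m11) + INR (m20 + m21) + a) (INR (m00 + m01) + /2) t)).
    + intros t Ht. unfold c. rewrite G_eq by auto. reflexivity.
    + apply imp_scal. exact HBt.
Qed.

Lemma multinom_pos n0 n1 n2 : 0 < multinom n0 n1 n2.
Proof.
  unfold multinom. apply Rdiv_lt_0_compat.
  apply INR_fact_lt_0.
  repeat apply Rmult_lt_0_compat; apply INR_fact_lt_0.
Qed.

Theorem mainTheorem12 (m00 m10 m20 m01 m11 m21 : nat) (a d : R)
  (ha : 0 < a) (hd : 0 <= d) (hm0 : (0 < m00 + m10 + m20)%nat) :
  let r := INR (m01 + m11 + m21) / INR (m00 + m10 + m20) in
  let m0p := INR (m00 + m01) in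
  let m1p := INR (m10 + m11) in
  let m2p := INR (m20 + m21) in
  let C := multinom m00 m10 m20 * multinom m01 m11 m21 in
  let al0 := INR (m10 + m20) + /2 in
  let be0 := INR m00 + /2 in
  let al1 := INR (m11 + m21) + /2 in
  let be1 := INR m01 + /2 in
  let K := Kconst r d in
  let I := Iconst al0 be0 al1 be1 r d in
  let p0 := pH0 m00 m10 m20 m01 m11 m21 a in
  let p1 := pH1 m00 m10 m20 m01 m11 m21 r d in
  p0 = C * (Beta (m1p + /2) (m2p + /2) / Beta (/2) (/2))
         * (Beta (m1p + m2p + a) (m0p + /2) / Beta a (/2)) /\
  p1 = C * (Beta (m1p + /2) (m2p + /2) * Beta al0 be0 * Beta al1 be1
            / (Beta (/2) (/2) ^ 3)) * (I / K) /\
  / (p0 / p1) = Beta al0 be0 * Beta al1 be1 * Beta a (/2)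
                / (Beta (m1p + m2p + a) (m0p + /2) * Beta (/2) (/2) ^ 2) * (I / K) /\
  (d = 0 -> K = 1 /\ I = 1).
Proof.
  intros r m0p m1p m2p C al0 be0 al1 be1 K I p0 p1.
  assert (Hr : 0 <= r).
  { unfold r. apply Rdiv_le_0_compat. apply pos_INR. apply lt_0_INR; lia. }
  assert (HB : 0 < Beta (/2) (/2)) by (apply beta_imp; lra).
  assert (HBa : 0 < Beta a (/2)) by (apply beta_imp; lra).
  assert (Ha0 : 0 < al0) by (unfold al0; generalize (pos_INR (m10 + m20)); lra).
  assert (Hb0 : 0 < be0) by (unfold be0; generalize (pos_INR m00); lra).
  assert (Ha1 : 0 < al1) by (unfold al1; generalize (pos_INR (m11 + m21)); lra).
  assert (Hb1 : 0 < be1) by (unfold be1; generalize (pos_INR m01); lra).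
  assert (HB0 : 0 < Beta al0 be0) by (apply beta_imp; auto).
  assert (HB1 : 0 < Beta al1 be1) by (apply beta_imp; auto).
  assert (HBm : 0 < Beta (m1p + /2) (m2p + /2))
    by (apply beta_imp; unfold m1p, m2p; generalize (pos_INR (m10 + m11)) (pos_INR (m20 + m21)); lra).
  assert (HBt : 0 < Beta (m1p + m2p + a) (m0p + /2))
    by (apply beta_imp; unfold m1p, m2p, m0p;
        generalize (pos_INR (m10 + m11)) (pos_INR (m20 + m21)) (pos_INR (m00 + m01)); lra).
  assert (HC : 0 < C) by (unfold C; apply Rmult_lt_0_compat; apply multinom_pos).
  destruct (K_val r d Hr hd) as [LK [HK HK0]].
  destruct (pH1_val m00 m10 m20 m01 m11 m21 r d Hr hd) as [L [Hp1 [HI HL0]]].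
  assert (Ep0 : p0 = C * / Beta (/2) (/2) * / Beta a (/2) * Beta (m1p + m2p + a) (m0p + /2)
                     * Beta (m1p + /2) (m2p + /2)).
  { unfold p0. rewrite pH0_val by auto. reflexivity. }
  fold K al0 be0 al1 be1 C in Hp1. fold p1 in Hp1. fold I in HI.
  fold m1p m2p in Hp1. fold al0 be0 al1 be1 in HI. fold al0 be0 al1 be1 in HL0. fold I in HI.
  clearbody C.
  assert (Hp0nz : p0 <> 0).
  { rewrite Ep0. apply Rgt_not_eq. repeat apply Rmult_lt_0_compat; auto; apply Rinv_0_lt_compat; auto. }
  assert (Ep1 : p1 = C * (Beta (m1p + /2) (m2p + /2) * Beta al0 be0 * Beta al1 be1
            / (Beta (/2) (/2) ^ 3)) * (I / K)).
  { rewrite Hp1, HI. unfold Rdiv. set (iK := / K). field. repeat split; lra. }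
  split; [rewrite Ep0; field; lra|].
  split; [exact Ep1|].
  split.
  - rewrite Rinv_div. rewrite Ep1, Ep0. set (IK := I / K). field. repeat split; lra.
  - intros Hd0. specialize (HK0 Hd0). specialize (HL0 Hd0).
    assert (EK : K = 1). { unfold K. rewrite HK, HK0. field. lra. }
    split; auto. rewrite HI, HL0. field. lra.
Qed.
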